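(* Let $h_{uA}(u,r,x^C)$ and symmetric $\mathring\gamma$-traceless $h_{AB}(u,r,x^C)$ be smooth, set $\check h_{uA}=h_{uA}/r^2$, $\check h_{AB}=h_{AB}/r^2$, and $V(r)=\varepsilon r-\alpha^2r^3-2m$. Let $i\ge0$ and suppose that the $i$-th $u$-derivatives of the two equations $$\partial_r\big[r^4\partial_r\check h_{uA}\big]=\mathring D^B\big[r^2\partial_r\check h_{AB}\big],$$ $$0=\partial_r\Big[r\partial_u\check h_{AB}-\tfrac12V\partial_r\check h_{AB}-\tfrac{V}{2r}\check h_{AB}-r\,\mathrm{TS}[\mathring D_A\check h_{uB}]\Big]+\Big(\frac{m}{r^2}-\alpha^2r\Big)\check h_{AB}-\mathrm{TS}[\mathring D_A\check h_{uB}]$$ hold. Define $$Q^{[3,i+1]}_A:=\mathring D^B\Big[2r\partial_u^{i+1}\check h_{AB}-V\partial_r\partial_u^i\check h_{AB}-\frac1{r^2}\partial_r\big(r^4\,\mathrm{TS}[\mathring D_A\partial_u^i\check h_{uB}]\big)+(P-\varepsilon)\partial_u^i\check h_{AB}\Big]+\alpha^2r^4\partial_r\partial_u^i\check h_{uA}+2m\big(3\partial_u^i\check h_{uA}+r\partial_r\partial_u^i\check h_{uA}\big).$$ Then $\partial_rQ^{[3,i+1]}_A=0$.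
   Context: $\mathbf S$ is a compact orientable two-dimensional manifold with metric $\mathring\gamma$ of constant Gauss curvature $\varepsilon\in\{0,\pm1\}$, Levi-Civita connection $\mathring D$; indices are raised with $\mathring\gamma$. Here $m\in\mathbb R$, $\alpha\in\mathbb R\cup i\mathbb R$ are constants, $(u,r,x^A)$ coordinates with $x^A$ on $\mathbf S$. $\mathrm{TS}[X_{AB}]=\frac12(X_{AB}+X_{BA}-\mathring\gamma^{CD}X_{CD}\mathring\gamma_{AB})$ is the traceless symmetric part, and $P$ acts on symmetric traceless tensors by $Ph_{AB}=\mathrm{TS}[\mathring D_A\mathring D^Ch_{BC}]$. *)

(* Defs.v *)
(* Stdlib reals + Coquelicot.
   The surface S is described in a local coordinate chart (x^1,x^2) ranging
   over an open set U of R^2; all tensors are given by their components. *)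
From Stdlib Require Import Reals List.
From Coquelicot Require Import Coquelicot.
Open Scope R_scope.

Inductive idx := I1 | I2.
Definition sum2 (f : idx -> R) : R := f I1 + f I2.

(* scalar fields of (u, r, x^1, x^2) *)
Definition field := R -> R -> R -> R -> R.

Definition d_u (f : field) : field := fun u r x y => Derive (fun t => f t r x y) u.
Definition d_r (f : field) : field := fun u r x y => Derive (fun t => f u t x y) r.
Definition d_x (f : field) : field := fun u r x y => Derive (fun t => f u r t y) x.
Definition d_y (f : field) : field := fun u r x y => Derive (fun t => f u r x t) y.
Definition d_ang (A : idx) (f : field) : field :=
  match A with I1 => d_x f | I2 => d_y f end.
Fixpoint d_u_n (n : nat) (f : field) : field :=
  match n with O => f | S k => d_u (d_u_n k f) end.

Inductive coord := Cu | Cr | Cx | Cy.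
Definition dcoord (c : coord) (f : field) : field :=
  match c with Cu => d_u f | Cr => d_r f | Cx => d_x f | Cy => d_y f end.
Definition iter_d (l : list coord) (f : field) : field := fold_right dcoord f l.
Definition uncurry4 (f : field) : R * R * R * R -> R :=
  fun p => match p with (u, r, x, y) => f u r x y end.
Definition smooth_on (D : R * R * R * R -> Prop) (f : field) : Prop :=
  forall (l : list coord) (u r x y : R), D (u, r, x, y) ->
    continuous (uncurry4 (iter_d l f)) (u, r, x, y) /\
    ex_derive (fun t => iter_d l f t r x y) u /\
    ex_derive (fun t => iter_d l f u t x y) r /\
    ex_derive (fun t => iter_d l f u r t y) x /\
    ex_derive (fun t => iter_d l f u r x t) y.

Definition metric := idx -> idx -> R -> R -> R.
Definition lift (f : R -> R -> R) : field := fun _ _ x y => f x y.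

Definition det_g (g : metric) (x y : R) : R :=
  g I1 I1 x y * g I2 I2 x y - g I1 I2 x y * g I2 I1 x y.
Definition ginv (g : metric) (A B : idx) (x y : R) : R :=
  match A, B with
  | I1, I1 => g I2 I2 x y / det_g g x y
  | I2, I2 => g I1 I1 x y / det_g g x y
  | I1, I2 => - g I1 I2 x y / det_g g x y
  | I2, I1 => - g I2 I1 x y / det_g g x y
  end.
Definition d2 (A : idx) (f : R -> R -> R) (x y : R) : R :=
  match A with
  | I1 => Derive (fun t => f t y) x
  | I2 => Derive (fun t => f x t) y
  end.
Definition Gam (g : metric) (C A B : idx) (x y : R) : R :=
  / 2 * sum2 (fun D => ginv g C D x y *
     (d2 A (g D B) x y + d2 B (g D A) x y - d2 D (g A B) x y)).
Definition Riem (g : metric) (A B C D : idx) (x y : R) : R :=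
  d2 C (Gam g A D B) x y - d2 D (Gam g A C B) x y
  + sum2 (fun E => Gam g A C E x y * Gam g E D B x y
                   - Gam g A D E x y * Gam g E C B x y).
Definition gauss_curv (g : metric) (x y : R) : R :=
  sum2 (fun A => g I1 A x y * Riem g A I2 I1 I2 x y) / det_g g x y.

Definition Dcov1 (g : metric) (w : idx -> field) (A B : idx) : field :=
  fun u r x y => d_ang A (w B) u r x y
                 - sum2 (fun C => Gam g C A B x y * w C u r x y).
Definition Dcov2 (g : metric) (h : idx -> idx -> field) (A B C : idx) : field :=
  fun u r x y => d_ang A (h B C) u r x y
    - sum2 (fun D => Gam g D A B x y * h D C u r x y
                     + Gam g D A C x y * h B D u r x y).
Definition div2 (g : metric) (X : idx -> idx -> field) (A : idx) : field :=
  fun u r x y => sum2 (fun B => sum2 (fun C =>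
                   ginv g B C x y * Dcov2 g X C A B u r x y)).
Definition TS (g : metric) (X : idx -> idx -> field) (A B : idx) : field :=
  fun u r x y => / 2 * (X A B u r x y + X B A u r x y
     - sum2 (fun C => sum2 (fun D => ginv g C D x y * X C D u r x y))
       * g A B x y).
(* P h_AB = TS[D_A D^C h_BC] *)
Definition Pop (g : metric) (h : idx -> idx -> field) : idx -> idx -> field :=
  TS g (Dcov1 g (div2 g h)).

Definition Vfun (eps a2 m r : R) : R := eps * r - a2 * r ^ 3 - 2 * m.

Definition chk1 (w : idx -> field) (A : idx) : field :=
  fun u r x y => w A u r x y / r ^ 2.
Definition chk2 (h : idx -> idx -> field) (A B : idx) : field :=
  fun u r x y => h A B u r x y / r ^ 2.

(* first equation: LHS - RHS *)
Definition Eq1 (g : metric) (hu : idx -> field) (h : idx -> idx -> field)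
    (A : idx) : field :=
  fun u r x y =>
    d_r (fun u r x y => r ^ 4 * d_r (chk1 hu A) u r x y) u r x y
    - div2 g (fun A B => fun u r x y => r ^ 2 * d_r (chk2 h A B) u r x y) A u r x y.

(* second equation: its right-hand side (required to vanish) *)
Definition Eq2 (g : metric) (eps a2 m : R) (hu : idx -> field)
    (h : idx -> idx -> field) (A B : idx) : field :=
  fun u r x y =>
    d_r (fun u r x y =>
           r * d_u (chk2 h A B) u r x y
           - / 2 * Vfun eps a2 m r * d_r (chk2 h A B) u r x y
           - Vfun eps a2 m r / (2 * r) * chk2 h A B u r x y
           - r * TS g (Dcov1 g (chk1 hu)) A B u r x y) u r x y
    + (m / r ^ 2 - a2 * r) * chk2 h A B u r x y
    - TS g (Dcov1 g (chk1 hu)) A B u r x y.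

(* the tensor inside D^B[...] in Q^{[3,i+1]}_A *)
Definition Qbracket (g : metric) (eps a2 m : R) (i : nat) (hu : idx -> field)
    (h : idx -> idx -> field) (A B : idx) : field :=
  fun u r x y =>
    2 * r * d_u_n (S i) (chk2 h A B) u r x y
    - Vfun eps a2 m r * d_r (d_u_n i (chk2 h A B)) u r x y
    - / r ^ 2 * d_r (fun u r x y =>
          r ^ 4 * TS g (Dcov1 g (fun C => d_u_n i (chk1 hu C))) A B u r x y)
        u r x y
    + Pop g (fun C D => d_u_n i (chk2 h C D)) A B u r x y
    - eps * d_u_n i (chk2 h A B) u r x y.

Definition Q3 (g : metric) (eps a2 m : R) (i : nat) (hu : idx -> field)
    (h : idx -> idx -> field) (A : idx) : field :=
  fun u r x y =>
    div2 g (Qbracket g eps a2 m i hu h) A u r x y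
    + a2 * r ^ 4 * d_r (d_u_n i (chk1 hu A)) u r x y
    + 2 * m * (3 * d_u_n i (chk1 hu A) u r x y
               + r * d_r (d_u_n i (chk1 hu A)) u r x y).

(* Main.v *)
Require Import Defs.
From Stdlib Require Import Reals.
From Coquelicot Require Import Coquelicot.
From Stdlib Require Import List Lra.
Open Scope R_scope.

Section Sm.
Variable D : R * R * R * R -> Prop.
Variable hD : open D.

Definition reg (f : field) u r x y :=
    continuous (uncurry4 f) (u, r, x, y) /\
    ex_derive (fun t => f t r x y) u /\
    ex_derive (fun t => f u t x y) r /\
    ex_derive (fun t => f u r t y) x /\
    ex_derive (fun t => f u r x t) y.

Definition eqD (f g : field) := forall u r x y, D (u, r, x, y) -> f u r x y = g u r x y.

Lemma open_nb u r x y : D (u, r, x, y) -> exists e : posreal, forall u' r' x' y',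
  Rabs (u' - u) < e -> Rabs (r' - r) < e -> Rabs (x' - x) < e -> Rabs (y' - y) < e ->
  D (u', r', x', y').
Proof.
  intros H. destruct (hD _ H) as [e He]. exists e. intros.
  apply He. repeat split; assumption.
Qed.

Lemma ballR (a b : R) (e : posreal) : ball a e b -> Rabs (b - a) < e.
Proof. intro H; exact H. Qed.

Lemma R0e (e : posreal) (a : R) : Rabs (a - a) < e.
Proof. rewrite Rminus_diag, Rabs_R0. apply cond_pos. Qed.

Lemma loc4 f g u r x y : eqD f g -> D (u, r, x, y) ->
  locally (u, r, x, y) (fun q => uncurry4 f q = uncurry4 g q).
Proof.
  intros Heq H. destruct (hD _ H) as [e He]. exists e.
  intros [[[u' r'] x'] y'] Hb. simpl. apply Heq. apply He. exact Hb.
Qed.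

Lemma d_ext c f g : eqD f g -> eqD (dcoord c f) (dcoord c g).
Proof.
  intros Heq u r x y H. destruct (open_nb _ _ _ _ H) as [e He].
  destruct c; simpl; apply Derive_ext_loc; exists e; intros t Ht;
  apply ballR in Ht; apply Heq; apply He; auto using R0e.
Qed.

Lemma reg_ext f g u r x y : eqD f g -> D (u, r, x, y) -> reg f u r x y -> reg g u r x y.
Proof.
  intros Heq H [H0 [H1 [H2 [H3 H4]]]]. destruct (open_nb _ _ _ _ H) as [e He].
  split; [|split; [|split; [|split]]].
  - eapply continuous_ext_loc; [|exact H0]. apply loc4; auto.
  - eapply ex_derive_ext_loc; [|exact H1]. exists e; intros t Ht;
    apply ballR in Ht; apply Heq; apply He; auto using R0e.
  - eapply ex_derive_ext_loc; [|exact H2]. exists e; intros t Ht;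
    apply ballR in Ht; apply Heq; apply He; auto using R0e.
  - eapply ex_derive_ext_loc; [|exact H3]. exists e; intros t Ht;
    apply ballR in Ht; apply Heq; apply He; auto using R0e.
  - eapply ex_derive_ext_loc; [|exact H4]. exists e; intros t Ht;
    apply ballR in Ht; apply Heq; apply He; auto using R0e.
Qed.

Definition Smooth (f : field) := smooth_on D f.

Lemma smooth_reg f : Smooth f -> forall u r x y, D (u, r, x, y) -> reg f u r x y.
Proof. intros Hf u r x y H. exact (Hf nil u r x y H). Qed.

Lemma iter_ext l f g : eqD f g -> eqD (iter_d l f) (iter_d l g).
Proof.
  induction l as [|c l IH]; intros Heq; simpl. exact Heq.
  apply d_ext. apply IH. exact Heq.
Qed.

Lemma S_ext f g : Smooth f -> eqD f g -> Smooth g.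
Proof.
  intros Hf Heq l u r x y H.
  apply (reg_ext (iter_d l f)); auto. apply iter_ext; auto. exact (Hf l u r x y H).
Qed.

Lemma coind (W : field -> Prop) :
  (forall w, W w -> forall u r x y, D (u, r, x, y) -> reg w u r x y) ->
  (forall w c, W w -> exists w', W w' /\ eqD (dcoord c w) w') ->
  forall w, W w -> Smooth w.
Proof.
  intros Hreg Hd.
  assert (Hl : forall l w, W w -> exists w', W w' /\ eqD (iter_d l w) w').
  { induction l as [|c l IH]; intros w Hw.
    - exists w; split; auto. intros ? ? ? ? ?; reflexivity.
    - destruct (IH w Hw) as [w' [Hw' He]].
      destruct (Hd w' c Hw') as [w'' [Hw'' He']].
      exists w''; split; auto. intros u r x y H. simpl.
      rewrite (d_ext c _ _ He u r x y H). apply He'; auto. }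
  intros w Hw l u r x y H.
  destruct (Hl l w Hw) as [w' [Hw' He]].
  apply (reg_ext w'); auto.
  intros ? ? ? ? H'; symmetry; apply He; auto.
Qed.


Definition U4 := (R * R * R * R)%type.

Lemma reg_plus f g u r x y : reg f u r x y -> reg g u r x y ->
  reg (fun u r x y => f u r x y + g u r x y) u r x y.
Proof.
  intros [F0 [F1 [F2 [F3 F4]]]] [G0 [G1 [G2 [G3 G4]]]].
  split; [|split; [|split; [|split]]].
  - eapply continuous_ext; [|apply (continuous_plus (uncurry4 f) (uncurry4 g)); eauto].
    intros [[[? ?] ?] ?]; reflexivity.
  - apply (ex_derive_plus (fun t => f t r x y) (fun t => g t r x y)); auto.
  - apply (ex_derive_plus (fun t => f u t x y) (fun t => g u t x y)); auto.
  - apply (ex_derive_plus (fun t => f u r t y) (fun t => g u r t y)); auto.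
  - apply (ex_derive_plus (fun t => f u r x t) (fun t => g u r x t)); auto.
Qed.

Lemma reg_mult f g u r x y : reg f u r x y -> reg g u r x y ->
  reg (fun u r x y => f u r x y * g u r x y) u r x y.
Proof.
  intros [F0 [F1 [F2 [F3 F4]]]] [G0 [G1 [G2 [G3 G4]]]].
  split; [|split; [|split; [|split]]].
  - eapply continuous_ext; [|apply (continuous_mult (K:=R_AbsRing) (uncurry4 f) (uncurry4 g)); eauto].
    intros [[[? ?] ?] ?]; reflexivity.
  - apply (ex_derive_mult (fun t => f t r x y) (fun t => g t r x y)); auto.
  - apply (ex_derive_mult (fun t => f u t x y) (fun t => g u t x y)); auto.
  - apply (ex_derive_mult (fun t => f u r t y) (fun t => g u r t y)); auto.
  - apply (ex_derive_mult (fun t => f u r x t) (fun t => g u r x t)); auto.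
Qed.

Lemma reg_const k u r x y : reg (fun _ _ _ _ => k) u r x y.
Proof.
  split; [|split; [|split; [|split]]].
  - apply (continuous_ext (fun _ => k)); [|apply continuous_const].
    intros [[[? ?] ?] ?]; reflexivity.
  all: apply ex_derive_const.
Qed.

Lemma dc_plus c f g u r x y : reg f u r x y -> reg g u r x y ->
  dcoord c (fun u r x y => f u r x y + g u r x y) u r x y =
  dcoord c f u r x y + dcoord c g u r x y.
Proof.
  intros [F0 [F1 [F2 [F3 F4]]]] [G0 [G1 [G2 [G3 G4]]]].
  destruct c; simpl; unfold d_u, d_r, d_x, d_y.
  - apply (Derive_plus (fun t => f t r x y) (fun t => g t r x y)); auto.
  - apply (Derive_plus (fun t => f u t x y) (fun t => g u t x y)); auto.
  - apply (Derive_plus (fun t => f u r t y) (fun t => g u r t y)); auto.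
  - apply (Derive_plus (fun t => f u r x t) (fun t => g u r x t)); auto.
Qed.

Lemma dc_mult c f g u r x y : reg f u r x y -> reg g u r x y ->
  dcoord c (fun u r x y => f u r x y * g u r x y) u r x y =
  dcoord c f u r x y * g u r x y + f u r x y * dcoord c g u r x y.
Proof.
  intros [F0 [F1 [F2 [F3 F4]]]] [G0 [G1 [G2 [G3 G4]]]].
  destruct c; simpl; unfold d_u, d_r, d_x, d_y.
  - apply (Derive_mult (fun t => f t r x y) (fun t => g t r x y)); auto.
  - apply (Derive_mult (fun t => f u t x y) (fun t => g u t x y)); auto.
  - apply (Derive_mult (fun t => f u r t y) (fun t => g u r t y)); auto.
  - apply (Derive_mult (fun t => f u r x t) (fun t => g u r x t)); auto.
Qed.

Lemma dc_const c k u r x y : dcoord c (fun _ _ _ _ => k) u r x y = 0.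
Proof. destruct c; simpl; unfold d_u, d_r, d_x, d_y; apply Derive_const. Qed.

Definition sumF (L : list field) : field :=
  fun u r x y => fold_right (fun f acc => f u r x y + acc) 0 L.

Lemma reg_sumF L u r x y : List.Forall (fun f => reg f u r x y) L -> reg (sumF L) u r x y.
Proof.
  induction 1 as [|f L Hf HL IH].
  - apply reg_const.
  - apply (reg_plus f (sumF L)); auto.
Qed.

Lemma dc_sumF c L u r x y : List.Forall (fun f => reg f u r x y) L ->
  dcoord c (sumF L) u r x y = sumF (map (dcoord c) L) u r x y.
Proof.
  induction 1 as [|f L Hf HL IH].
  - apply dc_const.
  - change (dcoord c (fun u r x y => f u r x y + sumF L u r x y) u r x y =
            dcoord c f u r x y + sumF (map (dcoord c) L) u r x y).
    rewrite dc_plus; auto. rewrite IH; auto. apply reg_sumF; auto.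
Qed.

Lemma sumF_app L1 L2 u r x y : sumF (L1 ++ L2) u r x y = sumF L1 u r x y + sumF L2 u r x y.
Proof.
  induction L1 as [|f L1 IH]; simpl. unfold sumF; simpl; ring.
  unfold sumF in *; simpl. rewrite IH. ring.
Qed.

Lemma sum_closure (W : field -> Prop) :
  (forall w, W w -> forall u r x y, D (u, r, x, y) -> reg w u r x y) ->
  (forall w c, W w -> exists L, List.Forall W L /\ eqD (dcoord c w) (sumF L)) ->
  forall L, List.Forall W L -> Smooth (sumF L).
Proof.
  intros Hreg Hd L0 HL0.
  apply (coind (fun f => exists L, List.Forall W L /\ f = sumF L)).
  - intros w [L [HL ->]] u r x y H. apply reg_sumF.
    eapply List.Forall_impl; [|exact HL]. intros f Hf; apply Hreg; auto.
  - intros w c [L [HL ->]].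
    assert (Hd' : forall M, List.Forall W M -> exists L', List.Forall W L' /\
              eqD (fun u r x y => sumF (map (dcoord c) M) u r x y) (sumF L')).
    { clear HL. induction 1 as [|f M Hf HM IH].
      - exists nil; split; auto. intros ? ? ? ? ?; reflexivity.
      - destruct (Hd f c Hf) as [L1 [HL1 E1]]. destruct IH as [L2 [HL2 E2]].
        exists (L1 ++ L2); split. apply List.Forall_app; auto.
        intros u r x y H. rewrite sumF_app. rewrite <- E1, <- E2; auto. }
    destruct (Hd' L HL) as [L' [HL' E]].
    exists (sumF L'); split. exists L'; auto.
    intros u r x y H. rewrite dc_sumF. apply E; auto.
    eapply List.Forall_impl; [|exact HL]. intros f Hf; apply Hreg; auto.
  - exists L0; auto.
Qed.

Lemma S_d c f : Smooth f -> Smooth (dcoord c f).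
Proof.
  intros Hf l u r x y H.
  assert (E : iter_d l (dcoord c f) = iter_d (l ++ c :: nil) f).
  { unfold iter_d. rewrite fold_right_app. reflexivity. }
  rewrite E. apply Hf; auto.
Qed.

Lemma S_const k : Smooth (fun _ _ _ _ => k).
Proof.
  apply (coind (fun w => exists k, w = fun _ _ _ _ => k)); [| |exists k; auto].
  - intros w [k' ->] u r x y H. apply reg_const.
  - intros w c [k' ->]. exists (fun _ _ _ _ => 0). split. exists 0; auto.
    intros u r x y H. apply dc_const.
Qed.

Lemma S_plus f g : Smooth f -> Smooth g -> Smooth (fun u r x y => f u r x y + g u r x y).
Proof.
  intros Hf Hg.
  apply (S_ext (sumF (f :: g :: nil))).
  - apply (sum_closure Smooth).
    + intros w Hw u r x y H. apply smooth_reg; auto.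
    + intros w c Hw. exists (dcoord c w :: nil). split.
      * constructor; [apply S_d; auto|constructor].
      * intros u' r' x' y' H. unfold sumF; simpl; ring.
    + constructor; [auto|constructor; [auto|constructor]].
  - intros u r x y H. unfold sumF; simpl; ring.
Qed.

Lemma S_mult f g : Smooth f -> Smooth g -> Smooth (fun u r x y => f u r x y * g u r x y).
Proof.
  intros Hf Hg.
  pose (W := fun w => exists a b, Smooth a /\ Smooth b /\ w = fun u r x y => a u r x y * b u r x y).
  apply (S_ext (sumF ((fun u r x y => f u r x y * g u r x y) :: nil))).
  - apply (sum_closure W).
    + intros w [a [b [Ha [Hb ->]]]] u r x y H. apply reg_mult; apply smooth_reg; auto.
    + intros w c [a [b [Ha [Hb ->]]]].
      exists ((fun u r x y => dcoord c a u r x y * b u r x y) ::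
              (fun u r x y => a u r x y * dcoord c b u r x y) :: nil).
      split.
      * apply List.Forall_cons; [|apply List.Forall_cons; [|apply List.Forall_nil]].
        -- exists (dcoord c a), b. split; [apply S_d; auto|split; [auto|reflexivity]].
        -- exists a, (dcoord c b). split; [auto|split; [apply S_d; auto|reflexivity]].
      * intros u r x y H. rewrite dc_mult by (apply smooth_reg; auto). unfold sumF; simpl; ring.
    + constructor; [|constructor]. exists f, g; auto.
  - intros u r x y H. unfold sumF; simpl; ring.
Qed.

Lemma S_scal k f : Smooth f -> Smooth (fun u r x y => k * f u r x y).
Proof. intros; apply (S_mult (fun _ _ _ _ => k) f); auto using S_const. Qed.

Lemma S_opp f : Smooth f -> Smooth (fun u r x y => - f u r x y).
Proof.
  intros Hf. apply (S_ext (fun u r x y => (-1) * f u r x y)). apply S_scal; auto.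
  intros ? ? ? ? ?; ring.
Qed.

Lemma S_minus f g : Smooth f -> Smooth g -> Smooth (fun u r x y => f u r x y - g u r x y).
Proof.
  intros Hf Hg. apply (S_ext (fun u r x y => f u r x y + - g u r x y)).
  apply (S_plus f (fun u r x y => - g u r x y)); auto using S_opp.
  intros ? ? ? ? ?; ring.
Qed.

Lemma S_pow f n : Smooth f -> Smooth (fun u r x y => f u r x y ^ n).
Proof.
  intros Hf. induction n as [|n IH]; simpl.
  - apply S_const.
  - apply (S_mult f (fun u r x y => f u r x y ^ n)); auto.
Qed.

Lemma cont_pow (F : R * R * R * R -> R) q n : continuous F q -> continuous (fun p => F p ^ n) q.
Proof.
  intros HF. induction n as [|n IH]; simpl.
  - apply continuous_const.
  - apply (continuous_mult (K:=R_AbsRing) F (fun p => F p ^ n)); auto.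
Qed.

Lemma S_inv f : Smooth f -> (forall u r x y, D (u, r, x, y) -> f u r x y <> 0) ->
  Smooth (fun u r x y => / f u r x y).
Proof.
  intros Hf Hnz.
  pose (W := fun w => exists a k, Smooth a /\ w = fun u r x y => a u r x y * (/ f u r x y) ^ k).
  apply (S_ext (sumF ((fun u r x y => 1 * (/ f u r x y) ^ 1) :: nil))).
  - apply (sum_closure W).
    + intros w [a [k [Ha ->]]] u r x y H.
      pose proof (smooth_reg a Ha u r x y H) as [A0 [A1 [A2 [A3 A4]]]].
      pose proof (smooth_reg f Hf u r x y H) as [F0 [F1 [F2 [F3 F4]]]].
      pose proof (Hnz u r x y H) as Hn.
      split; [|split; [|split; [|split]]].
      * eapply continuous_ext; [|apply (continuous_mult (K:=R_AbsRing) (uncurry4 a)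
           (fun q => (/ uncurry4 f q) ^ k)); auto].
        intros [[[? ?] ?] ?]; reflexivity.
        apply cont_pow. apply (continuous_comp (uncurry4 f) (fun z => / z)); auto.
        apply continuous_Rinv. exact Hn.
      * apply (ex_derive_mult (fun t => a t r x y) (fun t => (/ f t r x y) ^ k)); auto.
        apply (ex_derive_pow (fun t => / f t r x y)). apply (ex_derive_inv (fun t => f t r x y)); auto.
      * apply (ex_derive_mult (fun t => a u t x y) (fun t => (/ f u t x y) ^ k)); auto.
        apply (ex_derive_pow (fun t => / f u t x y)). apply (ex_derive_inv (fun t => f u t x y)); auto.
      * apply (ex_derive_mult (fun t => a u r t y) (fun t => (/ f u r t y) ^ k)); auto.
        apply (ex_derive_pow (fun t => / f u r t y)). apply (ex_derive_inv (fun t => f u r t y)); auto.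
      * apply (ex_derive_mult (fun t => a u r x t) (fun t => (/ f u r x t) ^ k)); auto.
        apply (ex_derive_pow (fun t => / f u r x t)). apply (ex_derive_inv (fun t => f u r x t)); auto.
    + intros w c [a [k [Ha ->]]].
      exists ((fun u r x y => dcoord c a u r x y * (/ f u r x y) ^ k) ::
              (fun u r x y => (- INR k * a u r x y * dcoord c f u r x y) * (/ f u r x y) ^ (S k)) :: nil).
      split.
      * constructor. exists (dcoord c a), k; split; auto using S_d.
        constructor. exists (fun u r x y => - INR k * a u r x y * dcoord c f u r x y), (S k).
        split; auto.
        apply (S_mult (fun u r x y => - INR k * a u r x y) (dcoord c f)); auto using S_d, S_scal.
        constructor.
      * intros u r x y H.
        pose proof (smooth_reg a Ha u r x y H) as [A0 [A1 [A2 [A3 A4]]]].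
        pose proof (smooth_reg f Hf u r x y H) as [F0 [F1 [F2 [F3 F4]]]].
        pose proof (Hnz u r x y H) as Hn.
        assert (Hk : forall df : R, INR k * (- df / f u r x y ^ 2) * (/ f u r x y) ^ Init.Nat.pred k
                  = - INR k * df * (/ f u r x y) ^ S (S k) * f u r x y).
        { intros df. destruct k as [|k]. simpl; ring.
          simpl Init.Nat.pred. simpl pow. field; auto. }
        unfold sumF; simpl fold_right.
        destruct c; simpl; unfold d_u, d_r, d_x, d_y.
        -- rewrite (Derive_mult (fun t => a t r x y) (fun t => (/ f t r x y) ^ k)); auto.
           rewrite (Derive_pow (fun t => / f t r x y)). rewrite (Derive_inv (fun t => f t r x y)); auto.
           rewrite Hk. simpl pow. field; auto.
           apply (ex_derive_inv (fun t => f t r x y)); auto.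
           apply (ex_derive_pow (fun t => / f t r x y)). apply (ex_derive_inv (fun t => f t r x y)); auto.
        -- rewrite (Derive_mult (fun t => a u t x y) (fun t => (/ f u t x y) ^ k)); auto.
           rewrite (Derive_pow (fun t => / f u t x y)). rewrite (Derive_inv (fun t => f u t x y)); auto.
           rewrite Hk. simpl pow. field; auto.
           apply (ex_derive_inv (fun t => f u t x y)); auto.
           apply (ex_derive_pow (fun t => / f u t x y)). apply (ex_derive_inv (fun t => f u t x y)); auto.
        -- rewrite (Derive_mult (fun t => a u r t y) (fun t => (/ f u r t y) ^ k)); auto.
           rewrite (Derive_pow (fun t => / f u r t y)). rewrite (Derive_inv (fun t => f u r t y)); auto.
           rewrite Hk. simpl pow. field; auto.
           apply (ex_derive_inv (fun t => f u r t y)); auto.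
           apply (ex_derive_pow (fun t => / f u r t y)). apply (ex_derive_inv (fun t => f u r t y)); auto.
        -- rewrite (Derive_mult (fun t => a u r x t) (fun t => (/ f u r x t) ^ k)); auto.
           rewrite (Derive_pow (fun t => / f u r x t)). rewrite (Derive_inv (fun t => f u r x t)); auto.
           rewrite Hk. simpl pow. field; auto.
           apply (ex_derive_inv (fun t => f u r x t)); auto.
           apply (ex_derive_pow (fun t => / f u r x t)). apply (ex_derive_inv (fun t => f u r x t)); auto.
    + constructor; [|constructor]. exists (fun _ _ _ _ => 1), 1%nat. split; auto using S_const.
  - intros u r x y H. unfold sumF; simpl. ring.
Qed.


Lemma cont4 (G : field) u r x y : continuous (uncurry4 G) (u, r, x, y) ->
  forall eps : posreal, exists d : posreal, forall u' r' x' y',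
  Rabs (u' - u) < d -> Rabs (r' - r) < d -> Rabs (x' - x) < d -> Rabs (y' - y) < d ->
  Rabs (G u' r' x' y' - G u r x y) < eps.
Proof.
  intros HG eps.
  destruct (HG (ball (uncurry4 G (u, r, x, y)) eps) (locally_ball _ eps)) as [d Hd].
  exists d. intros u' r' x' y' H1 H2 H3 H4.
  apply ballR. apply (Hd (u', r', x', y')). repeat split; assumption.
Qed.

Lemma comm_ur f : Smooth f -> eqD (d_u (d_r f)) (d_r (d_u f)).
Proof.
  intros Hf u r x y H. destruct (open_nb _ _ _ _ H) as [e He].
  unfold d_u, d_r.
  apply (Schwarz (fun s t => f s t x y) u r).
  - exists e. intros s t Hs Ht. pose proof (He s t x y Hs Ht (R0e e x) (R0e e y)) as Hp.
    destruct (Hf nil _ _ _ _ Hp) as [_ [A1 [A2 [A3 A4]]]].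
    destruct (Hf (Cr::nil) _ _ _ _ Hp) as [_ [B1 [B2 [B3 B4]]]].
    destruct (Hf (Cu::nil) _ _ _ _ Hp) as [_ [C1 [C2 [C3 C4]]]].
    split; [|split; [|split]]; assumption.
  - intros eps. destruct (cont4 _ _ _ _ _ (proj1 (Hf (Cu::Cr::nil) _ _ _ _ H)) eps) as [d Hd].
    exists d. intros s t Hs Ht. apply (Hd s t x y Hs Ht (R0e d x) (R0e d y)).
  - intros eps. destruct (cont4 _ _ _ _ _ (proj1 (Hf (Cr::Cu::nil) _ _ _ _ H)) eps) as [d Hd].
    exists d. intros s t Hs Ht. apply (Hd s t x y Hs Ht (R0e d x) (R0e d y)).
Qed.

Lemma comm_ux f : Smooth f -> eqD (d_u (d_x f)) (d_x (d_u f)).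
Proof.
  intros Hf u r x y H. destruct (open_nb _ _ _ _ H) as [e He].
  unfold d_u, d_x.
  apply (Schwarz (fun s t => f s r t y) u x).
  - exists e. intros s t Hs Ht. pose proof (He s r t y Hs (R0e e r) Ht (R0e e y)) as Hp.
    destruct (Hf nil _ _ _ _ Hp) as [_ [A1 [A2 [A3 A4]]]].
    destruct (Hf (Cx::nil) _ _ _ _ Hp) as [_ [B1 [B2 [B3 B4]]]].
    destruct (Hf (Cu::nil) _ _ _ _ Hp) as [_ [C1 [C2 [C3 C4]]]].
    split; [|split; [|split]]; assumption.
  - intros eps. destruct (cont4 _ _ _ _ _ (proj1 (Hf (Cu::Cx::nil) _ _ _ _ H)) eps) as [d Hd].
    exists d. intros s t Hs Ht. apply (Hd s r t y Hs (R0e d r) Ht (R0e d y)).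
  - intros eps. destruct (cont4 _ _ _ _ _ (proj1 (Hf (Cx::Cu::nil) _ _ _ _ H)) eps) as [d Hd].
    exists d. intros s t Hs Ht. apply (Hd s r t y Hs (R0e d r) Ht (R0e d y)).
Qed.

Lemma comm_uy f : Smooth f -> eqD (d_u (d_y f)) (d_y (d_u f)).
Proof.
  intros Hf u r x y H. destruct (open_nb _ _ _ _ H) as [e He].
  unfold d_u, d_y.
  apply (Schwarz (fun s t => f s r x t) u y).
  - exists e. intros s t Hs Ht. pose proof (He s r x t Hs (R0e e r) (R0e e x) Ht) as Hp.
    destruct (Hf nil _ _ _ _ Hp) as [_ [A1 [A2 [A3 A4]]]].
    destruct (Hf (Cy::nil) _ _ _ _ Hp) as [_ [B1 [B2 [B3 B4]]]].
    destruct (Hf (Cu::nil) _ _ _ _ Hp) as [_ [C1 [C2 [C3 C4]]]].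
    split; [|split; [|split]]; assumption.
  - intros eps. destruct (cont4 _ _ _ _ _ (proj1 (Hf (Cu::Cy::nil) _ _ _ _ H)) eps) as [d Hd].
    exists d. intros s t Hs Ht. apply (Hd s r x t Hs (R0e d r) (R0e d x) Ht).
  - intros eps. destruct (cont4 _ _ _ _ _ (proj1 (Hf (Cy::Cu::nil) _ _ _ _ H)) eps) as [d Hd].
    exists d. intros s t Hs Ht. apply (Hd s r x t Hs (R0e d r) (R0e d x) Ht).
Qed.

Lemma comm_rx f : Smooth f -> eqD (d_r (d_x f)) (d_x (d_r f)).
Proof.
  intros Hf u r x y H. destruct (open_nb _ _ _ _ H) as [e He].
  unfold d_r, d_x.
  apply (Schwarz (fun s t => f u s t y) r x).
  - exists e. intros s t Hs Ht. pose proof (He u s t y (R0e e u) Hs Ht (R0e e y)) as Hp.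
    destruct (Hf nil _ _ _ _ Hp) as [_ [A1 [A2 [A3 A4]]]].
    destruct (Hf (Cx::nil) _ _ _ _ Hp) as [_ [B1 [B2 [B3 B4]]]].
    destruct (Hf (Cr::nil) _ _ _ _ Hp) as [_ [C1 [C2 [C3 C4]]]].
    split; [|split; [|split]]; assumption.
  - intros eps. destruct (cont4 _ _ _ _ _ (proj1 (Hf (Cr::Cx::nil) _ _ _ _ H)) eps) as [d Hd].
    exists d. intros s t Hs Ht. apply (Hd u s t y (R0e d u) Hs Ht (R0e d y)).
  - intros eps. destruct (cont4 _ _ _ _ _ (proj1 (Hf (Cx::Cr::nil) _ _ _ _ H)) eps) as [d Hd].
    exists d. intros s t Hs Ht. apply (Hd u s t y (R0e d u) Hs Ht (R0e d y)).
Qed.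

Lemma comm_ry f : Smooth f -> eqD (d_r (d_y f)) (d_y (d_r f)).
Proof.
  intros Hf u r x y H. destruct (open_nb _ _ _ _ H) as [e He].
  unfold d_r, d_y.
  apply (Schwarz (fun s t => f u s x t) r y).
  - exists e. intros s t Hs Ht. pose proof (He u s x t (R0e e u) Hs (R0e e x) Ht) as Hp.
    destruct (Hf nil _ _ _ _ Hp) as [_ [A1 [A2 [A3 A4]]]].
    destruct (Hf (Cy::nil) _ _ _ _ Hp) as [_ [B1 [B2 [B3 B4]]]].
    destruct (Hf (Cr::nil) _ _ _ _ Hp) as [_ [C1 [C2 [C3 C4]]]].
    split; [|split; [|split]]; assumption.
  - intros eps. destruct (cont4 _ _ _ _ _ (proj1 (Hf (Cr::Cy::nil) _ _ _ _ H)) eps) as [d Hd].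
    exists d. intros s t Hs Ht. apply (Hd u s x t (R0e d u) Hs (R0e d x) Ht).
  - intros eps. destruct (cont4 _ _ _ _ _ (proj1 (Hf (Cy::Cr::nil) _ _ _ _ H)) eps) as [d Hd].
    exists d. intros s t Hs Ht. apply (Hd u s x t (R0e d u) Hs (R0e d x) Ht).
Qed.

Lemma S_r : Smooth (fun u r x y => r).
Proof.
  apply (coind (fun w => w = (fun u r x y => r) \/ exists k, w = fun _ _ _ _ => k)); [| |left; auto].
  - intros w [->|[k ->]] u r x y H; [|apply reg_const].
    split; [|split; [|split; [|split]]].
    + apply (continuous_ext (fun q => snd (fst (fst q)))).
      intros [[[? ?] ?] ?]; reflexivity.
      apply (continuous_comp (fun q : R * R * R * R => fst (fst q)) snd).
      apply (continuous_comp (fun q : R * R * R * R => fst q) fst).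
      apply continuous_fst. apply continuous_fst. apply continuous_snd.
    + apply ex_derive_const.
    + apply ex_derive_id.
    + apply ex_derive_const.
    + apply ex_derive_const.
  - intros w c [->|[k ->]].
    + destruct c.
      * exists (fun _ _ _ _ => 0); split; [right; exists 0; auto|].
        intros u r x y H; simpl; unfold d_u, d_x, d_y; apply Derive_const.
      * exists (fun _ _ _ _ => 1); split; [right; exists 1; auto|].
        intros u r x y H. simpl; unfold d_r. apply (Derive_id r).
      * exists (fun _ _ _ _ => 0); split; [right; exists 0; auto|].
        intros u r x y H; simpl; unfold d_u, d_x, d_y; apply Derive_const.
      * exists (fun _ _ _ _ => 0); split; [right; exists 0; auto|].
        intros u r x y H; simpl; unfold d_u, d_x, d_y; apply Derive_const.
    + exists (fun _ _ _ _ => 0); split; [right; exists 0; auto|].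
      intros u r x y H; apply dc_const.
Qed.

Lemma S_du f : Smooth f -> Smooth (d_u f).
Proof. exact (S_d Cu f). Qed.
Lemma S_dr f : Smooth f -> Smooth (d_r f).
Proof. exact (S_d Cr f). Qed.
Lemma S_dx f : Smooth f -> Smooth (d_x f).
Proof. exact (S_d Cx f). Qed.
Lemma S_dy f : Smooth f -> Smooth (d_y f).
Proof. exact (S_d Cy f). Qed.
Lemma S_dang A f : Smooth f -> Smooth (d_ang A f).
Proof. destruct A; [exact (S_d Cx f)|exact (S_d Cy f)]. Qed.
Lemma S_dun n f : Smooth f -> Smooth (d_u_n n f).
Proof. induction n; simpl; auto using S_du. Qed.

Lemma S_sum2 (F : idx -> field) : (forall C, Smooth (F C)) ->
  Smooth (fun u r x y => sum2 (fun C => F C u r x y)).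
Proof. intros HF. unfold sum2. apply (S_plus (F I1) (F I2)); auto. Qed.

Lemma S_div f g : Smooth f -> Smooth g -> (forall u r x y, D (u, r, x, y) -> g u r x y <> 0) ->
  Smooth (fun u r x y => f u r x y / g u r x y).
Proof. intros. unfold Rdiv. apply (S_mult f (fun u r x y => / g u r x y)); auto using S_inv. Qed.

Lemma S_id4 f : Smooth f -> Smooth (fun u r x y => f u r x y).
Proof. auto. Qed.

Variable g : metric.
Hypothesis Hg : forall A B, Smooth (fun u r x y => g A B x y).
Hypothesis Hdet : forall u r x y, D (u, r, x, y) -> det_g g x y <> 0.
Hypothesis Hr : forall u r x y, D (u, r, x, y) -> 0 < r.

Lemma S_det : Smooth (fun u r x y => det_g g x y).
Proof.
  unfold det_g.
  apply (S_minus (fun u r x y => g I1 I1 x y * g I2 I2 x y) (fun u r x y => g I1 I2 x y * g I2 I1 x y));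
  apply (S_mult (fun u r x y => g _ _ x y) (fun u r x y => g _ _ x y)); auto.
Qed.

Lemma S_ginv A B : Smooth (fun u r x y => ginv g A B x y).
Proof.
  destruct A, B; unfold ginv;
  apply (S_div _ (fun u r x y => det_g g x y)); auto using S_det.
  apply (S_opp (fun u r x y => g I1 I2 x y)); auto.
  apply (S_opp (fun u r x y => g I2 I1 x y)); auto.
Qed.

Lemma S_d2 A (F : R -> R -> R) : Smooth (fun u r x y => F x y) -> Smooth (fun u r x y => Defs.d2 A F x y).
Proof.
  intros HF. destruct A.
  - exact (S_d Cx (fun u r x y => F x y) HF).
  - exact (S_d Cy (fun u r x y => F x y) HF).
Qed.

Ltac smooth_hook := fail.
Ltac smooth_tac :=
  repeat match goal with
  | |- Smooth (fun u r x y => ?c) => apply (S_const c)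
  | |- Smooth (fun u r x y => r) => apply S_r
  | |- Smooth (fun u r x y => Vfun ?e ?a ?m r) => unfold Vfun
  | |- Smooth (fun u r x y => @?f u r x y / (2 * r)) => apply (S_div f (fun u r x y => 2 * r))
  | |- Smooth (fun u r x y => @?f u r x y + @?h u r x y) => apply (S_plus f h)
  | |- Smooth (fun u r x y => @?f u r x y - @?h u r x y) => apply (S_minus f h)
  | |- Smooth (fun u r x y => @?f u r x y * @?h u r x y) => apply (S_mult f h)
  | |- Smooth (fun u r x y => - @?f u r x y) => apply (S_opp f)
  | |- Smooth (fun u r x y => @?f u r x y ^ ?n) => apply (S_pow f n)
  | |- Smooth (fun u r x y => / @?f u r x y) => apply (S_inv f)
  | |- Smooth (fun u r x y => @?f u r x y / @?h u r x y) => apply (S_div f h)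
  | |- Smooth (fun u r x y => sum2 (fun C => @?F C u r x y)) => apply (S_sum2 F); intro
  | |- Smooth (fun u r x y => g ?A ?B x y) => apply (Hg A B)
  | |- Smooth (fun u r x y => ginv g ?A ?B x y) => apply (S_ginv A B)
  | |- Smooth (fun u r x y => det_g g x y) => apply S_det
  | |- Smooth (fun u r x y => Defs.d2 ?A ?F x y) => apply (S_d2 A F)
  | |- Smooth (fun u r x y => d_u ?f u r x y) => apply (S_du f)
  | |- Smooth (fun u r x y => d_r ?f u r x y) => apply (S_dr f)
  | |- Smooth (fun u r x y => d_x ?f u r x y) => apply (S_dx f)
  | |- Smooth (fun u r x y => d_y ?f u r x y) => apply (S_dy f)
  | |- Smooth (fun u r x y => d_ang ?A ?f u r x y) => apply (S_dang A f)
  | |- Smooth (fun u r x y => d_u_n ?n ?f u r x y) => apply (S_dun n f)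
  | |- Smooth (d_u ?f) => apply (S_du f)
  | |- Smooth (d_r ?f) => apply (S_dr f)
  | |- Smooth (d_x ?f) => apply (S_dx f)
  | |- Smooth (d_y ?f) => apply (S_dy f)
  | |- Smooth (d_ang ?A ?f) => apply (S_dang A f)
  | |- Smooth (d_u_n ?n ?f) => apply (S_dun n f)
  | H : forall C, Smooth (?w C) |- Smooth (fun u r x y => ?w ?C u r x y) => apply (H C)
  | H : forall C D, Smooth (?w C D) |- Smooth (fun u r x y => ?w ?C ?D u r x y) => apply (H C D)
  | H : forall C, Smooth (?w C) |- Smooth (?w ?C) => apply (H C)
  | H : forall C D, Smooth (?w C D) |- Smooth (?w ?C ?D) => apply (H C D)
  | H : Smooth ?f |- Smooth (fun u r x y => ?f u r x y) => exact H
  | |- Smooth _ => smooth_hook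
  | |- forall u r x y, D (u, r, x, y) -> _ <> 0 => let H := fresh in intros ? ? ? ? H
  | H : D (?u, ?r, ?x, ?y) |- det_g g _ _ <> 0 => apply (Hdet u r x y H)
  | H : D (?u, ?r, ?x, ?y) |- ?r ^ _ <> 0 => apply pow_nonzero; pose proof (Hr u r x y H); lra
  | H : D (?u, ?r, ?x, ?y) |- ?r <> 0 => pose proof (Hr u r x y H); lra
  | H : D (?u, ?r, ?x, ?y) |- ?k * ?r <> 0 => pose proof (Hr u r x y H); apply Rmult_integral_contrapositive_currified; lra
  end; try assumption.

Lemma S_Gam C A B : Smooth (fun u r x y => Gam g C A B x y).
Proof. unfold Gam. smooth_tac. Qed.

Ltac smooth_hook ::= match goal with
  | |- Smooth (fun u r x y => Gam g ?C ?A ?B x y) => apply (S_Gam C A B) end.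
Ltac side := first [assumption | solve [smooth_tac] | (intro; solve [smooth_tac])].

Lemma S_Dcov1 (w : idx -> field) A B : (forall C, Smooth (w C)) -> Smooth (Dcov1 g w A B).
Proof.
  intros Hw. unfold Dcov1. smooth_tac.
Qed.

Lemma S_Dcov2 (X : idx -> idx -> field) A B C : (forall C D, Smooth (X C D)) -> Smooth (Dcov2 g X A B C).
Proof.
  intros HX. unfold Dcov2. smooth_tac.
Qed.

Lemma S_div2 (X : idx -> idx -> field) A : (forall C D, Smooth (X C D)) -> Smooth (div2 g X A).
Proof.
  intros HX. unfold div2. smooth_tac. apply S_Dcov2; auto.
Qed.

Lemma S_TS (X : idx -> idx -> field) A B : (forall C D, Smooth (X C D)) -> Smooth (TS g X A B).
Proof.
  intros HX. unfold TS. smooth_tac.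
Qed.

Lemma S_Pop (X : idx -> idx -> field) A B : (forall C D, Smooth (X C D)) -> Smooth (Pop g X A B).
Proof.
  intros HX. unfold Pop. apply S_TS. intros C D0. apply S_Dcov1. intros C0. apply S_div2; auto.
Qed.

Ltac smooth_hook ::= match goal with
  | |- Smooth (fun u r x y => Gam g ?C ?A ?B x y) => apply (S_Gam C A B)
  | |- Smooth (fun u r x y => Dcov1 g ?w ?A ?B u r x y) => apply (S_Dcov1 w A B); intro; cbv beta
  | |- Smooth (fun u r x y => Dcov2 g ?w ?A ?B ?C u r x y) => apply (S_Dcov2 w A B C); intros; cbv beta
  | |- Smooth (fun u r x y => div2 g ?w ?A u r x y) => apply (S_div2 w A); intros; cbv beta
  | |- Smooth (fun u r x y => TS g ?w ?A ?B u r x y) => apply (S_TS w A B); intros; cbv beta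
  | |- Smooth (fun u r x y => Pop g ?w ?A ?B u r x y) => apply (S_Pop w A B); intros; cbv beta
  | |- Smooth (Dcov1 g ?w ?A ?B) => apply (S_Dcov1 w A B); intro; cbv beta
  | |- Smooth (Dcov2 g ?w ?A ?B ?C) => apply (S_Dcov2 w A B C); intros; cbv beta
  | |- Smooth (div2 g ?w ?A) => apply (S_div2 w A); intros; cbv beta
  | |- Smooth (TS g ?w ?A ?B) => apply (S_TS w A B); intros; cbv beta
  | |- Smooth (Pop g ?w ?A ?B) => apply (S_Pop w A B); intros; cbv beta
  end.

Definition nonang c := c = Cu \/ c = Cr.

Lemma dc_coef c (k : R -> R -> R) F u r x y : nonang c ->
  dcoord c (fun u r x y => k x y * F u r x y) u r x y = k x y * dcoord c F u r x y.
Proof. intros [-> | ->]; simpl; unfold d_u, d_r; apply Derive_scal. Qed.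

Lemma dc_coefr c (k : R -> R -> R) F u r x y : nonang c ->
  dcoord c (fun u r x y => F u r x y * k x y) u r x y = dcoord c F u r x y * k x y.
Proof.
  intros Hc. rewrite Rmult_comm. rewrite <- dc_coef by exact Hc.
  destruct c; simpl; unfold d_u, d_r, d_x, d_y; apply Derive_ext; intros; ring.
Qed.

Lemma dc_minus c f g' u r x y : reg f u r x y -> reg g' u r x y ->
  dcoord c (fun u r x y => f u r x y - g' u r x y) u r x y =
  dcoord c f u r x y - dcoord c g' u r x y.
Proof.
  intros [F0 [F1 [F2 [F3 F4]]]] [G0 [G1 [G2 [G3 G4]]]].
  destruct c; simpl; unfold d_u, d_r, d_x, d_y.
  - apply (Derive_minus (fun t => f t r x y) (fun t => g' t r x y)); auto.
  - apply (Derive_minus (fun t => f u t x y) (fun t => g' u t x y)); auto.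
  - apply (Derive_minus (fun t => f u r t y) (fun t => g' u r t y)); auto.
  - apply (Derive_minus (fun t => f u r x t) (fun t => g' u r x t)); auto.
Qed.

Lemma dc_minusS c f g' u r x y : Smooth f -> Smooth g' -> D (u, r, x, y) ->
  dcoord c (fun u r x y => f u r x y - g' u r x y) u r x y =
  dcoord c f u r x y - dcoord c g' u r x y.
Proof. intros; apply dc_minus; apply smooth_reg; auto. Qed.

Lemma dc_plusS c f g' u r x y : Smooth f -> Smooth g' -> D (u, r, x, y) ->
  dcoord c (fun u r x y => f u r x y + g' u r x y) u r x y =
  dcoord c f u r x y + dcoord c g' u r x y.
Proof. intros; apply dc_plus; apply smooth_reg; auto. Qed.

Lemma dc_multS c f g' u r x y : Smooth f -> Smooth g' -> D (u, r, x, y) ->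
  dcoord c (fun u r x y => f u r x y * g' u r x y) u r x y =
  dcoord c f u r x y * g' u r x y + f u r x y * dcoord c g' u r x y.
Proof. intros; apply dc_mult; apply smooth_reg; auto. Qed.

Lemma comm_ang c A f : nonang c -> Smooth f -> eqD (dcoord c (d_ang A f)) (d_ang A (dcoord c f)).
Proof.
  intros [-> | ->] Hf; destruct A; simpl.
  apply comm_ux; auto. apply comm_uy; auto. apply comm_rx; auto. apply comm_ry; auto.
Qed.

Ltac dc_simp Hc :=
  repeat first [ rewrite dc_plusS by side | rewrite dc_minusS by side
               | rewrite (dc_coef _ _ _ _ _ _ _ Hc) | rewrite (dc_coefr _ _ _ _ _ _ _ Hc) ].

Lemma dc_Dcov1 c w A B : nonang c -> (forall C, Smooth (w C)) ->
  eqD (dcoord c (Dcov1 g w A B)) (Dcov1 g (fun C => dcoord c (w C)) A B).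
Proof.
  intros Hc Hw u r x y H. unfold Dcov1, sum2. cbv beta.
  dc_simp Hc. rewrite (comm_ang c A (w B) Hc (Hw B) u r x y H). reflexivity.
Qed.

Lemma dc_Dcov2 c X A B C : nonang c -> (forall C D, Smooth (X C D)) ->
  eqD (dcoord c (Dcov2 g X A B C)) (Dcov2 g (fun C D => dcoord c (X C D)) A B C).
Proof.
  intros Hc HX u r x y H. unfold Dcov2, sum2. cbv beta.
  dc_simp Hc. rewrite (comm_ang c A (X B C) Hc (HX B C) u r x y H). reflexivity.
Qed.

Lemma dc_div2 c X A : nonang c -> (forall C D, Smooth (X C D)) ->
  eqD (dcoord c (div2 g X A)) (div2 g (fun C D => dcoord c (X C D)) A).
Proof.
  intros Hc HX u r x y H. unfold div2, sum2. cbv beta.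
  dc_simp Hc. repeat rewrite (dc_Dcov2 c X _ _ _ Hc HX u r x y H). reflexivity.
Qed.

Lemma dc_TS c X A B : nonang c -> (forall C D, Smooth (X C D)) ->
  eqD (dcoord c (TS g X A B)) (TS g (fun C D => dcoord c (X C D)) A B).
Proof.
  intros Hc HX u r x y H. unfold TS, sum2. cbv beta.
  dc_simp Hc. reflexivity.
Qed.

Lemma Dcov1_ext w w' A B : (forall C, eqD (w C) (w' C)) -> eqD (Dcov1 g w A B) (Dcov1 g w' A B).
Proof.
  intros E u r x y H. unfold Dcov1, sum2.
  assert (EA : d_ang A (w B) u r x y = d_ang A (w' B) u r x y).
  { destruct A; [apply (d_ext Cx)|apply (d_ext Cy)]; auto. }
  rewrite EA, !(E _ u r x y H). reflexivity.
Qed.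

Lemma Dcov2_ext X X' A B C : (forall C D, eqD (X C D) (X' C D)) -> eqD (Dcov2 g X A B C) (Dcov2 g X' A B C).
Proof.
  intros E u r x y H. unfold Dcov2, sum2.
  assert (EA : d_ang A (X B C) u r x y = d_ang A (X' B C) u r x y).
  { destruct A; [apply (d_ext Cx)|apply (d_ext Cy)]; auto. }
  rewrite EA, !(E _ _ u r x y H). reflexivity.
Qed.

Lemma div2_ext X X' A : (forall C D, eqD (X C D) (X' C D)) -> eqD (div2 g X A) (div2 g X' A).
Proof.
  intros E u r x y H. unfold div2, sum2.
  rewrite !(Dcov2_ext X X' _ _ _ E u r x y H). reflexivity.
Qed.

Lemma TS_ext X X' A B : (forall C D, eqD (X C D) (X' C D)) -> eqD (TS g X A B) (TS g X' A B).
Proof.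
  intros E u r x y H. unfold TS, sum2. rewrite !(E _ _ u r x y H). reflexivity.
Qed.

Lemma dc_Pop c X A B : nonang c -> (forall C D, Smooth (X C D)) ->
  eqD (dcoord c (Pop g X A B)) (Pop g (fun C D => dcoord c (X C D)) A B).
Proof.
  intros Hc HX u r x y H. unfold Pop at 1.
  rewrite (dc_TS c _ A B Hc) by (auto; intros; smooth_tac).
  unfold Pop. apply TS_ext; auto. intros C D0 u' r' x' y' H'.
  rewrite (dc_Dcov1 c _ C D0 Hc) by (auto; intros; smooth_tac).
  apply Dcov1_ext; auto. intros C0 u2 r2 x2 y2 H2.
  apply dc_div2; auto.
Qed.

Lemma dang_phi A (phi : R -> R) F u r x y :
  d_ang A (fun u r x y => phi r * F u r x y) u r x y = phi r * d_ang A F u r x y.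
Proof. destruct A; simpl; unfold d_x, d_y; apply Derive_scal. Qed.

Lemma du_phi (phi : R -> R) F u r x y :
  d_u (fun u r x y => phi r * F u r x y) u r x y = phi r * d_u F u r x y.
Proof. unfold d_u; apply Derive_scal. Qed.

Lemma div2_phi (phi : R -> R) X A u r x y :
  div2 g (fun C D => fun u r x y => phi r * X C D u r x y) A u r x y = phi r * div2 g X A u r x y.
Proof.
  unfold div2, Dcov2, sum2. cbv beta. rewrite !dang_phi. ring.
Qed.

Lemma dang_lin A (p1 p2 : R -> R) F G u r x y : Smooth F -> Smooth G -> D (u, r, x, y) ->
  d_ang A (fun u r x y => p1 r * F u r x y + p2 r * G u r x y) u r x y =
  p1 r * d_ang A F u r x y + p2 r * d_ang A G u r x y.
Proof.
  intros HF HG H.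
  destruct (smooth_reg F HF u r x y H) as [_ [_ [_ [F3 F4]]]].
  destruct (smooth_reg G HG u r x y H) as [_ [_ [_ [G3 G4]]]].
  destruct A; simpl; unfold d_x, d_y.
  - rewrite (Derive_plus (fun t => p1 r * F u r t y) (fun t => p2 r * G u r t y)).
    rewrite !Derive_scal. reflexivity. apply ex_derive_scal; auto. apply ex_derive_scal; auto.
  - rewrite (Derive_plus (fun t => p1 r * F u r x t) (fun t => p2 r * G u r x t)).
    rewrite !Derive_scal. reflexivity. apply ex_derive_scal; auto. apply ex_derive_scal; auto.
Qed.

Lemma TSD_lin (p1 p2 : R -> R) (a1 a2 : idx -> field) A B u r x y :
  (forall C, Smooth (a1 C)) -> (forall C, Smooth (a2 C)) -> D (u, r, x, y) ->
  TS g (Dcov1 g (fun C => fun u r x y => p1 r * a1 C u r x y + p2 r * a2 C u r x y)) A B u r x y =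
  p1 r * TS g (Dcov1 g a1) A B u r x y + p2 r * TS g (Dcov1 g a2) A B u r x y.
Proof.
  intros H1 H2 H. unfold TS, Dcov1, sum2. cbv beta.
  rewrite !(dang_lin _ p1 p2) by auto. ring.
Qed.

Ltac rwdc L := let E := fresh "E" in pose proof L as E; cbv beta iota delta [dcoord] in E; rewrite E; clear E.

Lemma dc_TSD c a A B : nonang c -> (forall C, Smooth (a C)) ->
  eqD (dcoord c (TS g (Dcov1 g a) A B)) (TS g (Dcov1 g (fun C => dcoord c (a C))) A B).
Proof.
  intros Hc Ha u r x y H.
  rewrite (dc_TS c _ A B Hc) by (auto; intros; smooth_tac).
  apply TS_ext; auto. intros C D0. apply dc_Dcov1; auto.
Qed.

Lemma dr_phi (phi : R -> R) dphi F u r x y : is_derive phi r dphi -> Smooth F -> D (u, r, x, y) ->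
  d_r (fun u r x y => phi r * F u r x y) u r x y = dphi * F u r x y + phi r * d_r F u r x y.
Proof.
  intros Hp HF H. destruct (smooth_reg F HF u r x y H) as [_ [_ [F2 _]]].
  unfold d_r. rewrite (Derive_mult phi (fun t => F u t x y)); auto.
  rewrite (is_derive_unique _ _ _ Hp). reflexivity. exists dphi; exact Hp.
Qed.

Variables eps a2 m : R.

Definition E1op (a : idx -> field) (b : idx -> idx -> field) (A : idx) : field :=
  fun u r x y =>
    d_r (fun u r x y => r ^ 4 * d_r (a A) u r x y) u r x y
    - div2 g (fun A B => fun u r x y => r ^ 2 * d_r (b A B) u r x y) A u r x y.

Definition E2op (a : idx -> field) (b : idx -> idx -> field) (A B : idx) : field :=
  fun u r x y =>
    d_r (fun u r x y =>
           r * d_u (b A B) u r x y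
           - / 2 * Vfun eps a2 m r * d_r (b A B) u r x y
           - Vfun eps a2 m r / (2 * r) * b A B u r x y
           - r * TS g (Dcov1 g a) A B u r x y) u r x y
    + (m / r ^ 2 - a2 * r) * b A B u r x y
    - TS g (Dcov1 g a) A B u r x y.

Lemma Cu_nonang : nonang Cu.
Proof. left; reflexivity. Qed.
Lemma Cr_nonang : nonang Cr.
Proof. right; reflexivity. Qed.

Lemma E1_du a b A : (forall C, Smooth (a C)) -> (forall C D, Smooth (b C D)) ->
  eqD (d_u (E1op a b A)) (E1op (fun C => d_u (a C)) (fun C D => d_u (b C D)) A).
Proof.
  intros Ha Hb u r x y H. unfold E1op at 1.
  rewrite (dc_minusS Cu) by side. cbv beta iota delta [dcoord].
  rewrite (comm_ur (fun u r x y => r ^ 4 * d_r (a A) u r x y)) by (auto; smooth_tac).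
  rewrite (d_ext Cr _ (fun u r x y => r ^ 4 * d_r (d_u (a A)) u r x y)); auto.
  2:{ intros u' r' x' y' H'. rewrite (du_phi (fun t => t ^ 4)).
      rewrite (comm_ur (a A)); auto. }
  rewrite (dc_div2 Cu _ A Cu_nonang) by (auto; intros; smooth_tac).
  rewrite (div2_ext _ (fun C D => fun u r x y => r ^ 2 * d_r (d_u (b C D)) u r x y) A); auto.
  intros C D0 u' r' x' y' H'. simpl. rewrite (du_phi (fun t => t ^ 2)).
  rewrite (comm_ur (b C D0)); auto.
Qed.

Lemma E2_du a b A B : (forall C, Smooth (a C)) -> (forall C D, Smooth (b C D)) ->
  eqD (d_u (E2op a b A B)) (E2op (fun C => d_u (a C)) (fun C D => d_u (b C D)) A B).
Proof.
  intros Ha Hb u r x y H. unfold E2op at 1. unfold Vfun.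
  rewrite (dc_minusS Cu) by side. rewrite (dc_plusS Cu) by side. cbv beta iota delta [dcoord].
  rewrite (du_phi (fun t => m / t ^ 2 - a2 * t)).
  rwdc (dc_TSD Cu a A B Cu_nonang Ha u r x y H). cbv beta iota delta [dcoord].
  match goal with |- d_u (d_r ?F) _ _ _ _ + _ - _ = _ =>
    rewrite (comm_ur F) by (auto; smooth_tac) end.
  match goal with |- d_r ?F _ _ _ _ + _ - _ = _ => set (FF := F) end.
  assert (EF : eqD FF (fun u r x y =>
           r * d_u (d_u (b A B)) u r x y
           - / 2 * Vfun eps a2 m r * d_r (d_u (b A B)) u r x y
           - Vfun eps a2 m r / (2 * r) * d_u (b A B) u r x y
           - r * TS g (Dcov1 g (fun C => d_u (a C))) A B u r x y)).
  { subst FF. intros u' r' x' y' H'.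
    rewrite (dc_minusS Cu) by side. rewrite (dc_minusS Cu) by side. rewrite (dc_minusS Cu) by side.
    cbv beta iota delta [dcoord].
    rewrite (du_phi (fun t => t)), (du_phi (fun t => / 2 * (eps * t - a2 * t ^ 3 - 2 * m))),
            (du_phi (fun t => (eps * t - a2 * t ^ 3 - 2 * m) / (2 * t))), (du_phi (fun t => t)).
    rewrite (comm_ur (b A B)) by auto.
    rwdc (dc_TSD Cu a A B Cu_nonang Ha u' r' x' y' H').
    unfold Vfun. reflexivity. }
  rwdc (d_ext Cr _ _ EF u r x y H).
  unfold E2op. reflexivity.
Qed.

Lemma E1_iter n a b A : (forall C, Smooth (a C)) -> (forall C D, Smooth (b C D)) ->
  eqD (d_u_n n (E1op a b A)) (E1op (fun C => d_u_n n (a C)) (fun C D => d_u_n n (b C D)) A).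
Proof.
  intros Ha Hb. induction n as [|n IH].
  - intros u r x y H. reflexivity.
  - intros u r x y H. simpl d_u_n.
    rwdc (d_ext Cu _ _ IH u r x y H).
    apply (E1_du (fun C => d_u_n n (a C)) (fun C D => d_u_n n (b C D))); auto;
    intros; apply S_dun; auto.
Qed.

Lemma E2_iter n a b A B : (forall C, Smooth (a C)) -> (forall C D, Smooth (b C D)) ->
  eqD (d_u_n n (E2op a b A B)) (E2op (fun C => d_u_n n (a C)) (fun C D => d_u_n n (b C D)) A B).
Proof.
  intros Ha Hb. induction n as [|n IH].
  - intros u r x y H. reflexivity.
  - intros u r x y H. simpl d_u_n.
    rwdc (d_ext Cu _ _ IH u r x y H).
    apply (E2_du (fun C => d_u_n n (a C)) (fun C D => d_u_n n (b C D))); auto;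
    intros; apply S_dun; auto.
Qed.

Definition Qbr (a : idx -> field) (b : idx -> idx -> field) (A B : idx) : field := fun u r x y =>
    2 * r * d_u (b A B) u r x y
    - Vfun eps a2 m r * d_r (b A B) u r x y
    - / r ^ 2 * d_r (fun u r x y => r ^ 4 * TS g (Dcov1 g a) A B u r x y) u r x y
    + Pop g b A B u r x y
    - eps * b A B u r x y.

Definition Q3op (a : idx -> field) (b : idx -> idx -> field) (A : idx) : field := fun u r x y =>
    div2 g (Qbr a b) A u r x y
    + a2 * r ^ 4 * d_r (a A) u r x y
    + 2 * m * (3 * a A u r x y + r * d_r (a A) u r x y).

Ltac nz := repeat split; intro; nra.
Ltac isd := auto_derive; [try nz | try (field; nz)].

Section Final.
Variables (a : idx -> field) (b : idx -> idx -> field).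
Hypothesis Ha : forall C, Smooth (a C).
Hypothesis Hb : forall C D, Smooth (b C D).
Hypothesis HE1 : forall A u r x y, D (u, r, x, y) -> E1op a b A u r x y = 0.
Hypothesis HE2 : forall A B u r x y, D (u, r, x, y) -> E2op a b A B u r x y = 0.

Lemma E1' C : eqD (div2 g (fun C D => d_r (b C D)) C)
   (fun u r x y => 4 * r * d_r (a C) u r x y + r ^ 2 * d_r (d_r (a C)) u r x y).
Proof.
  intros u r x y H. pose proof (Hr u r x y H) as Hr0.
  pose proof (HE1 C u r x y H) as e. unfold E1op in e.
  rewrite (dr_phi (fun t => t ^ 4) (4 * r ^ 3)) in e; [|isd|smooth_tac|auto].
  rewrite (div2_phi (fun t => t ^ 2) (fun C D => d_r (b C D))) in e.
  apply (Rmult_eq_reg_l (r ^ 2)); [|nz]. nra.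
Qed.

Lemma dT C D0 : eqD (d_r (TS g (Dcov1 g a) C D0)) (TS g (Dcov1 g (fun C => d_r (a C))) C D0).
Proof.
  intros u r x y H. rwdc (dc_TSD Cr a C D0 Cr_nonang Ha u r x y H). reflexivity.
Qed.

Lemma ddT C D0 : eqD (d_r (d_r (TS g (Dcov1 g a) C D0)))
   (TS g (Dcov1 g (fun C => d_r (d_r (a C)))) C D0).
Proof.
  intros u r x y H. rwdc (d_ext Cr _ _ (dT C D0) u r x y H).
  rwdc (dc_TSD Cr (fun C => d_r (a C)) C D0 Cr_nonang) ; auto.
  intros; smooth_tac.
Qed.

Lemma PopE C D0 : eqD (Pop g (fun C D => d_r (b C D)) C D0)
  (fun u r x y => 4 * r * TS g (Dcov1 g (fun C => d_r (a C))) C D0 u r x y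
                 + r ^ 2 * TS g (Dcov1 g (fun C => d_r (d_r (a C)))) C D0 u r x y).
Proof.
  intros u r x y H. unfold Pop.
  rewrite (TS_ext _ (fun C D => Dcov1 g (fun C => fun u r x y =>
      (fun t => 4 * t) r * d_r (a C) u r x y + (fun t => t ^ 2) r * d_r (d_r (a C)) u r x y) C D)); auto.
  - rewrite (TSD_lin (fun t => 4 * t) (fun t => t ^ 2)); auto; intros; smooth_tac.
  - intros C1 D1. apply Dcov1_ext. intros C2. apply E1'.
Qed.

Lemma StepR C D0 : eqD (d_r (Qbr a b C D0))
  (fun u r x y => - (a2 * r ^ 2 + 2 * m / r) * d_r (b C D0) u r x y).
Proof.
  intros u r x y H. pose proof (Hr u r x y H) as Hr0.
  pose proof (HE2 C D0 u r x y H) as e. unfold E2op in e.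
  assert (E4 : eqD (d_r (fun u r x y => r ^ 4 * TS g (Dcov1 g a) C D0 u r x y))
     (fun u r x y => 4 * r ^ 3 * TS g (Dcov1 g a) C D0 u r x y + r ^ 4 * d_r (TS g (Dcov1 g a) C D0) u r x y)).
  { intros u' r' x' y' H'. rewrite (dr_phi (fun t => t ^ 4) (4 * r' ^ 3)); auto; [isd|smooth_tac]. }
  unfold Qbr.
  rewrite (dc_minusS Cr) by side. rewrite (dc_plusS Cr) by side.
  rewrite (dc_minusS Cr) by side. rewrite (dc_minusS Cr) by side.
  cbv beta iota delta [dcoord].
  rewrite (dr_phi (fun t => 2 * t) 2); [|isd|smooth_tac|auto].
  rewrite (dr_phi (Vfun eps a2 m) (eps - 3 * a2 * r ^ 2)); [|unfold Vfun; isd|smooth_tac|auto].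
  rewrite (dr_phi (fun t => / t ^ 2) (- 2 / r ^ 3)); [|isd|smooth_tac|auto].
  rewrite (dr_phi (fun _ => eps) 0); [|isd|smooth_tac|auto].
  rwdc (d_ext Cr _ _ E4 u r x y H).
  rewrite (dc_plusS Cr) by side. cbv beta iota delta [dcoord].
  rewrite (dr_phi (fun t => 4 * t ^ 3) (12 * r ^ 2)); [|isd|smooth_tac|auto].
  rewrite (dr_phi (fun t => t ^ 4) (4 * r ^ 3)); [|isd|smooth_tac|auto].
  try rewrite (dr_phi (fun t => t ^ 4) (4 * r ^ 3)); [|isd|smooth_tac|auto].
  rwdc (dc_Pop Cr b C D0 Cr_nonang Hb u r x y H).
  rewrite (PopE C D0 u r x y H).
  rewrite (ddT C D0 u r x y H). rewrite (dT C D0 u r x y H).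
  rewrite (dc_minusS Cr) in e by side. rewrite (dc_minusS Cr) in e by side.
  rewrite (dc_minusS Cr) in e by side.
  cbv beta iota delta [dcoord] in e.
  rewrite (dr_phi (fun t => t) 1) in e; [|isd|smooth_tac|auto].
  rewrite (dr_phi (fun t => / 2 * Vfun eps a2 m t) (/ 2 * (eps - 3 * a2 * r ^ 2))) in e;
    [|unfold Vfun; isd|smooth_tac|auto].
  rewrite (dr_phi (fun t => Vfun eps a2 m t / (2 * t))
     ((eps - 3 * a2 * r ^ 2) / (2 * r) - (eps * r - a2 * r ^ 3 - 2 * m) / (2 * r ^ 2))) in e;
    [|unfold Vfun; isd|smooth_tac|auto].
  rewrite (dr_phi (fun t => t) 1) in e; [|isd|smooth_tac|auto].
  rewrite (dT C D0 u r x y H) in e.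
  unfold Vfun in *.
  match type of e with ?X = 0 => match goal with |- _ = ?Y => transitivity (Y + 2 * X) end end.
  - field. nz.
  - rewrite e. ring.
Qed.

Lemma final_Q A : eqD (d_r (Q3op a b A)) (fun _ _ _ _ => 0).
Proof.
  intros u r x y H. pose proof (Hr u r x y H) as Hr0.
  assert (HQ : forall C D, Smooth (Qbr a b C D)) by (intros; unfold Qbr; smooth_tac).
  unfold Q3op.
  rewrite (dc_plusS Cr) by side. rewrite (dc_plusS Cr) by side.
  cbv beta iota delta [dcoord].
  rwdc (dc_div2 Cr (Qbr a b) A Cr_nonang HQ u r x y H).
  rewrite (div2_ext _ (fun C D => fun u r x y => (fun t => - (a2 * t ^ 2 + 2 * m / t)) r * d_r (b C D) u r x y) A)
    by (auto; intros C1 D1; apply StepR).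
  rewrite (div2_phi (fun t => - (a2 * t ^ 2 + 2 * m / t)) (fun C D => d_r (b C D))).
  rewrite (E1' A u r x y H).
  rewrite (dr_phi (fun t => a2 * t ^ 4) (4 * a2 * r ^ 3)); [|isd|smooth_tac|auto].
  rewrite (dr_phi (fun _ => 2 * m) 0); [|isd|smooth_tac|auto].
  rewrite (dc_plusS Cr) by side. cbv beta iota delta [dcoord].
  rewrite (dr_phi (fun _ => 3) 0); [|isd|smooth_tac|auto].
  rewrite (dr_phi (fun t => t) 1); [|isd|smooth_tac|auto].
  field. nz.
Qed.

End Final.

End Sm.

Theorem lemma3p1
  (eps m a2 : R) (heps : eps = 0 \/ eps = 1 \/ eps = -1)
  (U : R * R -> Prop) (hU : open U)
  (g : metric)
  (g_smooth : forall A B, smooth_on (fun p => match p with (_, _, x, y) => U (x, y) end)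
                                    (lift (g A B)))
  (g_sym : forall x y, U (x, y) -> g I1 I2 x y = g I2 I1 x y)
  (g_pos : forall x y, U (x, y) -> 0 < g I1 I1 x y /\ 0 < det_g g x y)
  (g_curv : forall x y, U (x, y) -> gauss_curv g x y = eps)
  (D : R * R * R * R -> Prop) (hD : open D)
  (hDdom : forall u r x y, D (u, r, x, y) -> 0 < r /\ U (x, y))
  (hu : idx -> field) (h : idx -> idx -> field)
  (hu_smooth : forall A, smooth_on D (hu A))
  (h_smooth : forall A B, smooth_on D (h A B))
  (h_sym : forall A B u r x y, D (u, r, x, y) -> h A B u r x y = h B A u r x y)
  (h_tl : forall u r x y, D (u, r, x, y) ->
            sum2 (fun A => sum2 (fun B => ginv g A B x y * h A B u r x y)) = 0)
  (i : nat)
  (eq1 : forall A u r x y, D (u, r, x, y) -> d_u_n i (Eq1 g hu h A) u r x y = 0)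
  (eq2 : forall A B u r x y, D (u, r, x, y) ->
           d_u_n i (Eq2 g eps a2 m hu h A B) u r x y = 0) :
  forall A u r x y, D (u, r, x, y) -> d_r (Q3 g eps a2 m i hu h A) u r x y = 0.
Proof.
  intros A u r x y H.
  assert (Hr : forall u r x y, D (u, r, x, y) -> 0 < r).
  { intros u0 r0 x0 y0 H0. apply (hDdom _ _ _ _ H0). }
  assert (Hg' : forall A B, Smooth D (fun _ _ x y => g A B x y)).
  { intros A0 B0 l u0 r0 x0 y0 H0. apply (g_smooth A0 B0 l u0 r0 x0 y0).
    exact (proj2 (hDdom _ _ _ _ H0)). }
  assert (Hdet : forall u r x y, D (u, r, x, y) -> det_g g x y <> 0).
  { intros u0 r0 x0 y0 H0. destruct (g_pos _ _ (proj2 (hDdom _ _ _ _ H0))) as [_ Hd].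
    intro Hc; lra. }
  assert (Hc1 : forall C, Smooth D (chk1 hu C)).
  { intros C. unfold chk1.
    apply (S_div D hD (hu C) (fun u r x y => r ^ 2)).
    - exact (hu_smooth C).
    - apply (S_pow D hD (fun u r x y => r)). apply S_r; exact hD.
    - intros u0 r0 x0 y0 H0. apply pow_nonzero. pose proof (Hr _ _ _ _ H0). lra. }
  assert (Hc2 : forall C D0, Smooth D (chk2 h C D0)).
  { intros C D0. unfold chk2.
    apply (S_div D hD (h C D0) (fun u r x y => r ^ 2)).
    - exact (h_smooth C D0).
    - apply (S_pow D hD (fun u r x y => r)). apply S_r; exact hD.
    - intros u0 r0 x0 y0 H0. apply pow_nonzero. pose proof (Hr _ _ _ _ H0). lra. }
  assert (Ha : forall C, Smooth D ((fun C => d_u_n i (chk1 hu C)) C)).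
  { intros C. apply S_dun. auto. }
  assert (Hb : forall C D0, Smooth D ((fun C D0 => d_u_n i (chk2 h C D0)) C D0)).
  { intros C D0. apply S_dun. auto. }
  assert (HE1 : forall A u r x y, D (u, r, x, y) ->
     E1op g (fun C => d_u_n i (chk1 hu C)) (fun C D0 => d_u_n i (chk2 h C D0)) A u r x y = 0).
  { intros A0 u0 r0 x0 y0 H0.
    rewrite <- (E1_iter D hD g Hg' Hdet i (chk1 hu) (chk2 h) A0 Hc1 Hc2 u0 r0 x0 y0 H0).
    exact (eq1 A0 u0 r0 x0 y0 H0). }
  assert (HE2 : forall A B u r x y, D (u, r, x, y) ->
     E2op g eps a2 m (fun C => d_u_n i (chk1 hu C)) (fun C D0 => d_u_n i (chk2 h C D0)) A B u r x y = 0).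
  { intros A0 B0 u0 r0 x0 y0 H0.
    rewrite <- (E2_iter D hD g Hg' Hdet Hr eps a2 m i (chk1 hu) (chk2 h) A0 B0 Hc1 Hc2 u0 r0 x0 y0 H0).
    exact (eq2 A0 B0 u0 r0 x0 y0 H0). }
  exact (final_Q D hD g Hg' Hdet Hr eps a2 m _ _ Ha Hb HE1 HE2 A u r x y H).
Qed.
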